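(* Let $F_W: V^n \to \mathbb{R}^{|V|}$ be a transformer with end-to-end Lipschitz constant $\Lambda(W)$, token embedding $E$, and $C_E = \max_{t,t' \in V}\|E(t)-E(t')\|$. Let $e = (n^*, f, \phi, \tau^*, \varepsilon_{\mathrm{fit}})$ be a parametrized expert, i.e. $n^* \in V^n$, $\phi: V^* \to \mathbb{R}^k$, $f: \mathbb{R}^k \to \mathbb{R}^{|V|}$, $\tau^*>0$, and $\|F_W(n^* ) - f(\phi(n^* ))\| \le \varepsilon_{\mathrm{fit}}$. Assume $\phi$ extracts the parameter vector at the divergence embedding, so that $\|\phi(x) - \phi(n^* )\| \le C_E$ for every input $x$, and that $f$ is Lipschitz with $\mathrm{Lip}(f) \le \Lambda(W)$. Then for every input $x \in V^n$, \[ \|F_W(x) - f(\phi(x))\| \le \varepsilon_{\mathrm{fit}} + 2\Lambda(W) C_E . \] In particular, if $\delta > \varepsilon_{\mathrm{fit}} + 2\Lambda(W) C_E$, then $\|F_W(x) - f(\phi(x))\| \le \delta$ for every input $x$, with no restriction on the trie distance $d_{\mathcal T}(x,n^* )$.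
   Context: $V$ is a finite vocabulary, $P_{\mathcal M}$ a generative model over $V^*$, and the trie metric is $d_{\mathcal T}(s,s') = -\log_2 P_{\mathcal M}(s \wedge s')$ where $s\wedge s'$ is the longest common prefix. $F_W$ is a pre-norm transformer with embedding $E$; $\Lambda(W) = \prod_{\ell=1}^L \kappa^{(\ell)}$ where $\kappa^{(\ell)} = (1 + L_{\mathrm{attn}}^{(\ell)}\gamma^{(\ell)}/\varepsilon_{\mathrm{LN}})(1 + \|W_{\mathrm{MLP}}^{(\ell)}\|_{\mathrm{op}}\gamma^{(\ell)}/\varepsilon_{\mathrm{LN}})$, $L_{\mathrm{attn}}^{(\ell)} = \|W_V^{(\ell)}\|_{\mathrm{op}} + \frac{1}{2\sqrt{d_{\mathrm{head}}}}\|W_Q^{(\ell)}\|_{\mathrm{op}}\|W_K^{(\ell)}\|_{\mathrm{op}}\max_j\|\mathbf v_j\|$ (LayerNorm scale $\gamma^{(\ell)}$, stability constant $\varepsilon_{\mathrm{LN}}$, MLP norm including activation Lipschitz constants). This constant satisfies: for any $s,s'\in V^n$ first differing at position $\bar d+1$, $\|F_W(s)-F_W(s')\| \le \Lambda(W)\|E(s_{\bar d+1}) - E(s'_{\bar d+1})\|$. *)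

(* Defs.v *)
From HB Require Import structures.
From mathcomp Require Import all_boot all_order all_algebra.
From mathcomp Require Import reals.
Set Implicit Arguments. Unset Strict Implicit. Unset Printing Implicit Defensive.
Import Order.TTheory GRing.Theory Num.Theory.
Local Open Scope ring_scope.

Definition enorm (R : realType) (m : nat) (v : 'rV[R]_m) : R :=
  Num.sqrt (\sum_(i < m) (v ord0 i) ^+ 2).

Definition embDiam (R : realType) (V : finType) (d : nat) (E : V -> 'rV[R]_d) : R :=
  \big[Num.max/0]_(t : V) \big[Num.max/0]_(t' : V) enorm (E t - E t').

Definition divergence_lipschitz (R : realType) (V : finType) (n d : nat)
  (F : n.-tuple V -> 'rV[R]_#|V|) (E : V -> 'rV[R]_d) (Lam : R) : Prop :=
  forall (s s' : n.-tuple V) (j : 'I_n),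
    (forall i : 'I_n, (i < j)%N -> tnth s i = tnth s' i) ->
    tnth s j != tnth s' j ->
    enorm (F s - F s') <= Lam * enorm (E (tnth s j) - E (tnth s' j)).

(* Main.v *)
Require Import Defs.
From HB Require Import structures.
From mathcomp Require Import all_boot all_order all_algebra.
From mathcomp Require Import reals.
From mathcomp Require Import ring lra.
Import Order.TTheory GRing.Theory Num.Theory.
Local Open Scope ring_scope.

Set Implicit Arguments.
Section Aux.
Context {R : realType}.

Lemma cs_ineq (m : nat) (u v : 'I_m -> R) :
  (\sum_i u i * v i) ^+ 2 <= (\sum_i u i ^+ 2) * (\sum_i v i ^+ 2).
Proof.
have H : 0 <= \sum_i \sum_j (u i * v j - u j * v i) ^+ 2.
  by apply: sumr_ge0 => i _; apply: sumr_ge0 => j _; exact: sqr_ge0.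
have E : \sum_i \sum_j (u i * v j - u j * v i) ^+ 2 =
   2 * ((\sum_i u i ^+ 2) * (\sum_i v i ^+ 2) - (\sum_i u i * v i) ^+ 2).
  have E1 : forall i j, (u i * v j - u j * v i) ^+ 2 =
     u i ^+ 2 * v j ^+ 2 + u j ^+ 2 * v i ^+ 2 - 2 * ((u i * v i) * (u j * v j)).
    by move=> i j; ring.
  under eq_bigr do under eq_bigr do rewrite E1.
  under eq_bigr do rewrite sumrB big_split /=.
  rewrite sumrB big_split /=.
  have -> : \sum_i \sum_j u j ^+ 2 * v i ^+ 2 = \sum_i \sum_j u i ^+ 2 * v j ^+ 2.
    by rewrite exchange_big.
  have -> : \sum_i \sum_j u i ^+ 2 * v j ^+ 2 = (\sum_i u i ^+ 2) * (\sum_i v i ^+ 2).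
    by rewrite mulr_suml; apply: eq_bigr => i _; rewrite mulr_sumr.
  have -> : \sum_i \sum_j 2 * (u i * v i * (u j * v j)) =
            2 * \sum_i \sum_j (u i * v i * (u j * v j)).
    by rewrite mulr_sumr; apply: eq_bigr => i _; rewrite mulr_sumr.
  have -> : \sum_i \sum_j (u i * v i * (u j * v j)) = (\sum_i u i * v i) ^+ 2.
    by rewrite expr2 mulr_suml; apply: eq_bigr => i _; rewrite mulr_sumr.
  ring.
rewrite E in H; rewrite -subr_ge0; lra.
Qed.

Lemma enorm_ge0 m (v : 'rV[R]_m) : 0 <= enorm v.
Proof. exact: sqrtr_ge0. Qed.

Lemma enorm_sq m (v : 'rV[R]_m) : enorm v ^+ 2 = \sum_i v ord0 i ^+ 2.
Proof. by rewrite /enorm sqr_sqrtr // sumr_ge0 // => i _; exact: sqr_ge0. Qed.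

Lemma enorm_triangle m (u v : 'rV[R]_m) : enorm (u + v) <= enorm u + enorm v.
Proof.
have hu := enorm_ge0 u; have hv := enorm_ge0 v; have huv := enorm_ge0 (u+v).
rewrite -(ler_pXn2r (n:=2)) // ?nnegrE ?addr_ge0 //.
have -> : enorm (u + v) ^+ 2 = enorm u ^+ 2 + enorm v ^+ 2
   + 2 * \sum_i u ord0 i * v ord0 i.
  rewrite !enorm_sq mulr_sumr -!big_split /=; apply: eq_bigr => i _.
  rewrite mxE; ring.
have cs := cs_ineq (fun i => u ord0 i) (fun i => v ord0 i).
rewrite -!enorm_sq -exprMn in cs.
have : \sum_i u ord0 i * v ord0 i <= enorm u * enorm v.
  have h := ler_norm (\sum_i u ord0 i * v ord0 i).
  apply: le_trans h _.
  by rewrite -(ler_pXn2r (n:=2)) ?nnegrE ?mulr_ge0 // real_normK ?num_real.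
move=> h; nra.
Qed.

Lemma enormN m (v : 'rV[R]_m) : enorm (- v) = enorm v.
Proof. by rewrite /enorm; congr Num.sqrt; apply: eq_bigr => i _; rewrite mxE sqrrN. Qed.

Lemma enorm0 m : enorm (0 : 'rV[R]_m) = 0.
Proof.
rewrite /enorm (eq_bigr (fun _ => 0)) ?big1 ?sqrtr0 // => i _; by rewrite mxE expr0n.
Qed.

Lemma le_bigmax0 {I : finType} (G : I -> R) (t : I) : G t <= \big[Num.max/0]_(i : I) G i.
Proof. by rewrite (bigD1 t) //= le_max lexx. Qed.

Lemma bigmax0_ge0 (I : finType) (G : I -> R) : 0 <= \big[Num.max/0]_(i : I) G i.
Proof.
elim/big_rec: _ => // i x _ hx; by rewrite le_max hx orbT.
Qed.

Lemma emb_le (V : finType) d (E : V -> 'rV[R]_d) a b : enorm (E a - E b) <= embDiam E.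
Proof. rewrite /embDiam.
have h1 := le_bigmax0 (fun t => \big[Num.max/0]_(t' : V) enorm (E t - E t')) a.
have h2 := le_bigmax0 (fun t' => enorm (E a - E t')) b.
simpl in h1, h2. exact: le_trans h2 h1. Qed.

End Aux.

Theorem mainTheorem2
  (R : realType) (V : finType) (n d k : nat)
  (F : n.-tuple V -> 'rV[R]_#|V|) (E : V -> 'rV[R]_d) (Lam : R)
  (hLam0 : 0 <= Lam)
  (hLam : divergence_lipschitz F E Lam)
  (nstar : n.-tuple V) (f : 'rV[R]_k -> 'rV[R]_#|V|) (phi : seq V -> 'rV[R]_k)
  (taustar eps_fit : R)
  (htau : 0 < taustar)
  (hfit : enorm (F nstar - f (phi nstar)) <= eps_fit)
  (hphi : forall x : n.-tuple V, enorm (phi x - phi nstar) <= embDiam E)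
  (hf : forall a b : 'rV[R]_k, enorm (f a - f b) <= Lam * enorm (a - b)) :
  (forall x : n.-tuple V,
     enorm (F x - f (phi x)) <= eps_fit + 2 * Lam * embDiam E) /\
  (forall delta : R, eps_fit + 2 * Lam * embDiam E < delta ->
     forall x : n.-tuple V, enorm (F x - f (phi x)) <= delta).
Proof.
have hC : 0 <= embDiam E by rewrite /embDiam bigmax0_ge0.
have hF : forall x : n.-tuple V, enorm (F x - F nstar) <= Lam * embDiam E.
  move=> x.
  case: (pickP (fun j : 'I_n => tnth x j != tnth nstar j)) => [j0 hj0|hnone].
    case: (@arg_minnP _ j0 (fun j : 'I_n => tnth x j != tnth nstar j) (fun j : 'I_n => nat_of_ord j) hj0) => j hj hmin.
    apply: le_trans (hLam x nstar j _ hj) _.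
      move=> i hi; apply/eqP; apply: contraTT hi => hne.
      by rewrite -leqNgt; apply: hmin.
    by apply: ler_wpM2l => //; apply: emb_le.
  have -> : x = nstar.
    by apply: eq_from_tnth => i; move: (hnone i) => /= /negbFE /eqP.
  by rewrite subrr enorm0 mulr_ge0.
have main : forall x : n.-tuple V,
     enorm (F x - f (phi x)) <= eps_fit + 2 * Lam * embDiam E.
  move=> x.
  have e : F x - f (phi x) = (F x - F nstar) + ((F nstar - f (phi nstar)) + (f (phi nstar) - f (phi x))).
    by rewrite !addrA subrK subrK.
  rewrite e.
  apply: le_trans (enorm_triangle _ _) _.
  have h2 := enorm_triangle (F nstar - f (phi nstar)) (f (phi nstar) - f (phi x)).
  have h3 := hf (phi nstar) (phi x).
  have h4 : enorm (phi nstar - phi x) <= embDiam E.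
    by rewrite -enormN opprB; apply: hphi.
  have h5 : Lam * enorm (phi nstar - phi x) <= Lam * embDiam E by apply: ler_wpM2l.
  have h1 := hF x.
  lra.
split=> // delta hd x; apply: le_trans (main x) _; exact: ltW.
Qed.
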